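(* Let $(C,D)$ define an irreducible MSPP of order $p$ (a MAP with $C$ diagonal). Then $T_1^{\pi}\ge_{\mathrm{st}} T_1^{\alpha}$, i.e. $$\boldsymbol{\pi}e^{Ct}\mathbf{1}\ \ge\ \boldsymbol{\alpha}e^{Ct}\mathbf{1}\qquad\text{for all } t\ge 0.$$
   Context: A Markovian arrival process (MAP) of order $p$ is specified by $p\times p$ real matrices $C$ and $D$ such that $D$ has nonnegative entries, $C$ has nonnegative off-diagonal entries, and $Q=C+D$ is the generator (row sums zero) of an irreducible continuous-time Markov chain on $\{1,\dots,p\}$; $C$ is assumed nonsingular. An MSPP is a MAP with $C$ diagonal. $\mathbf{1}$ is the all-ones column vector. $\boldsymbol{\pi}$ is the stationary distribution of $Q$ ($\boldsymbol{\pi}Q=\mathbf{0}$, $\boldsymbol{\pi}\mathbf{1}=1$), and $\boldsymbol{\alpha}$ is the stationary distribution of $P=(-C)^{-1}D$ ($\boldsymbol{\alpha}P=\boldsymbol{\alpha}$, $\boldsymbol{\alpha}\mathbf{1}=1$). $T_1^{\boldsymbol{\eta}}$ denotes the time of the first event when the initial phase has distribution $\boldsymbol{\eta}$; $\mathbb{P}(T_1^{\boldsymbol{\eta}}>t)=\boldsymbol{\eta}e^{Ct}\mathbf{1}$. $X\ge_{\mathrm{st}}Y$ means $\mathbb{P}(X>t)\ge\mathbb{P}(Y>t)$ for all $t$. *)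

(* Defs.v *)
From Stdlib Require Import Arith Reals Lra.
Open Scope R_scope.

(* Matrices of order p are functions nat -> nat -> R, only indices < p matter;
   row vectors are functions nat -> R. *)

Fixpoint fsum (n : nat) (f : nat -> R) : R :=
  match n with
  | O => 0
  | S m => fsum m f + f m
  end.

Definition mmul (p : nat) (A B : nat -> nat -> R) : nat -> nat -> R :=
  fun i j => fsum p (fun k => A i k * B k j).

Definition madd (A B : nat -> nat -> R) : nat -> nat -> R :=
  fun i j => A i j + B i j.

Definition mopp (A : nat -> nat -> R) : nat -> nat -> R :=
  fun i j => - A i j.

Definition mid : nat -> nat -> R :=
  fun i j => if Nat.eqb i j then 1 else 0.

Fixpoint mpow (p : nat) (A : nat -> nat -> R) (n : nat) : nat -> nat -> R :=
  match n with
  | O => mid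
  | S m => mmul p (mpow p A m) A
  end.

Definition vmul (p : nat) (v : nat -> R) (A : nat -> nat -> R) : nat -> R :=
  fun j => fsum p (fun i => v i * A i j).

Definition vsum1 (p : nat) (v : nat -> R) : R := fsum p v.

Definition is_mexp (p : nat) (A : nat -> nat -> R) (t : R)
  (E : nat -> nat -> R) : Prop :=
  forall i j, (i < p)%nat -> (j < p)%nat ->
    infinite_sum (fun n => t ^ n / INR (fact n) * mpow p A n i j) (E i j).

Definition is_inverse (p : nat) (A B : nat -> nat -> R) : Prop :=
  (forall i j, (i < p)%nat -> (j < p)%nat -> mmul p A B i j = mid i j) /\
  (forall i j, (i < p)%nat -> (j < p)%nat -> mmul p B A i j = mid i j).

Inductive reach (p : nat) (Q : nat -> nat -> R) : nat -> nat -> Prop :=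
  | reach_refl i : reach p Q i i
  | reach_step i k j : (k < p)%nat -> i <> k -> 0 < Q i k ->
      reach p Q k j -> reach p Q i j.

Definition is_generator (p : nat) (Q : nat -> nat -> R) : Prop :=
  (forall i j, (i < p)%nat -> (j < p)%nat -> i <> j -> 0 <= Q i j) /\
  (forall i, (i < p)%nat -> fsum p (fun j => Q i j) = 0).

Definition irreducible (p : nat) (Q : nat -> nat -> R) : Prop :=
  forall i j, (i < p)%nat -> (j < p)%nat -> reach p Q i j.

Definition is_MAP (p : nat) (C D : nat -> nat -> R) : Prop :=
  (forall i j, (i < p)%nat -> (j < p)%nat -> 0 <= D i j) /\
  (forall i j, (i < p)%nat -> (j < p)%nat -> i <> j -> 0 <= C i j) /\
  is_generator p (madd C D) /\
  irreducible p (madd C D) /\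
  (exists Ci, is_inverse p C Ci).

Definition is_MSPP (p : nat) (C D : nat -> nat -> R) : Prop :=
  is_MAP p C D /\
  (forall i j, (i < p)%nat -> (j < p)%nat -> i <> j -> C i j = 0).

Definition is_stat_gen (p : nat) (Q : nat -> nat -> R) (v : nat -> R) : Prop :=
  (forall j, (j < p)%nat -> vmul p v Q j = 0) /\ vsum1 p v = 1.

Definition is_stat_dtmc (p : nat) (P : nat -> nat -> R) (v : nat -> R) : Prop :=
  (forall j, (j < p)%nat -> vmul p v P j = v j) /\ vsum1 p v = 1.

(* Main.v *)
Require Import Defs.
From Stdlib Require Import Reals Lra Lia Classical FunctionalExtensionality.
Open Scope R_scope.

Lemma fsum_ext n f g : (forall i, (i < n)%nat -> f i = g i) -> fsum n f = fsum n g.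
Proof. induction n; simpl; intros H; auto. rewrite IHn; [rewrite H|]; auto; intros; apply H; lia. Qed.

Lemma fsum_plus n f g : fsum n (fun i => f i + g i) = fsum n f + fsum n g.
Proof. induction n; simpl; [ring|rewrite IHn; ring]. Qed.

Lemma fsum_scal n c f : fsum n (fun i => c * f i) = c * fsum n f.
Proof. induction n; simpl; [ring|rewrite IHn; ring]. Qed.

Lemma fsum_swap n m (f : nat -> nat -> R) :
  fsum n (fun j => fsum m (fun i => f i j)) = fsum m (fun i => fsum n (fun j => f i j)).
Proof.
  induction n; simpl.
  - induction m; simpl; auto. rewrite <- IHm; ring.
  - rewrite IHn. rewrite <- fsum_plus. reflexivity.
Qed.

Lemma fsum_nonneg n f : (forall i, (i < n)%nat -> 0 <= f i) -> 0 <= fsum n f.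
Proof. induction n; simpl; intros H; [lra|]. assert (0 <= f n) by (apply H; lia).
  assert (0 <= fsum n f) by (apply IHn; intros; apply H; lia). lra. Qed.

Lemma fsum_pos n f : (0 < n)%nat -> (forall i, (i < n)%nat -> 0 < f i) -> 0 < fsum n f.
Proof. intros Hn H. destruct n; [lia|]. simpl.
  assert (0 < f n) by (apply H; lia).
  assert (0 <= fsum n f) by (apply fsum_nonneg; intros; left; apply H; lia). lra. Qed.

Lemma fsum_zero_each n f : (forall i, (i < n)%nat -> 0 <= f i) -> fsum n f = 0 ->
  forall i, (i < n)%nat -> f i = 0.
Proof. induction n; simpl; intros H Hs i Hi; [lia|].
  assert (0 <= f n) by (apply H; lia).
  assert (0 <= fsum n f) by (apply fsum_nonneg; intros; apply H; lia).
  destruct (Nat.eq_dec i n). subst; lra.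
  apply IHn; [intros; apply H; lia| lra | lia]. Qed.

Lemma fsum_single n f j : (j < n)%nat -> (forall i, (i < n)%nat -> i <> j -> f i = 0) ->
  fsum n f = f j.
Proof. induction n; simpl; intros Hj H; [lia|].
  destruct (Nat.eq_dec j n).
  - subst. assert (fsum n f = 0). { clear IHn Hj. assert (forall i, (i<n)%nat -> f i = 0) by (intros; apply H; lia).
      clear H. induction n; simpl; auto. rewrite IHn, H0; [ring|lia|intros; apply H0; lia]. } lra.
  - rewrite IHn; [rewrite (H n); [ring|lia|auto]|lia|intros; apply H; lia]. Qed.

Lemma fsum_lin4 n a b c d f g h k :
  fsum n (fun j => a * f j + b * g j + c * h j + d * k j) =
  a * fsum n f + b * fsum n g + c * fsum n h + d * fsum n k.
Proof. induction n; simpl; [ring|rewrite IHn; ring]. Qed.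

Definition inker p Q v := forall j, (j < p)%nat -> vmul p v Q j = 0.

Lemma pos_prop p Q v : is_generator p Q -> inker p Q v ->
  forall i k, (i < p)%nat -> (k < p)%nat -> i <> k -> 0 < Q i k -> 0 < v i -> 0 < v k.
Proof.
  intros [Hoff Hrow] Hk i k Hi Hkp Hik HQ Hv.
  set (s j := if Rlt_dec 0 (v j) then 1 else 0).
  assert (Hsum : fsum p (fun i => v i * fsum p (fun j => s j * Q i j)) = 0).
  { transitivity (fsum p (fun j => s j * vmul p v Q j)).
    - unfold vmul.
      transitivity (fsum p (fun i => fsum p (fun j => s j * (v i * Q i j)))).
      { apply fsum_ext; intros. rewrite <- fsum_scal. apply fsum_ext; intros; ring. }
      rewrite <- (fsum_swap p p (fun i j => s j * (v i * Q i j))).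
      apply fsum_ext; intros. rewrite fsum_scal. reflexivity.
    - transitivity (fsum p (fun _ => 0)). apply fsum_ext; intros; rewrite Hk; auto; ring.
      clear. induction p; simpl; auto; lra. }
  assert (Hdec : forall i, (i < p)%nat -> fsum p (fun j => s j * Q i j)
            = fsum p (fun j => Q i j) - fsum p (fun j => (1 - s j) * Q i j)).
  { intros i0 _. assert (E: fsum p (fun j => Q i0 j) = fsum p (fun j => s j * Q i0 j) + fsum p (fun j => (1 - s j) * Q i0 j)).
    { rewrite <- fsum_plus. apply fsum_ext; intros; ring. } lra. }
  assert (Hnonneg2 : forall i, (i < p)%nat -> 0 < v i -> forall j, (j < p)%nat -> 0 <= (1 - s j) * Q i j).
  { intros i0 Hi0 Hv0 j Hj. unfold s. destruct (Rlt_dec 0 (v j)). lra.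
    assert (i0 <> j) by (intro; subst; contradiction). 
    replace (1 - 0) with 1 by ring. rewrite Rmult_1_l. apply Hoff; auto. }
  assert (Hterm : forall i, (i < p)%nat -> 0 <= - (v i * fsum p (fun j => s j * Q i j))).
  { intros i0 Hi0. destruct (Rlt_dec 0 (v i0)).
    - rewrite Hdec, Hrow; auto.
      assert (0 <= fsum p (fun j => (1 - s j) * Q i0 j)) by (apply fsum_nonneg; auto).
      nra.
    - assert (0 <= fsum p (fun j => s j * Q i0 j)).
      { apply fsum_nonneg. intros j Hj. unfold s. destruct (Rlt_dec 0 (v j)).
        assert (i0 <> j) by (intro; subst; contradiction). rewrite Rmult_1_l; apply Hoff; auto. lra. }
      nra. }
  assert (Hz := fsum_zero_each p _ Hterm).
  assert (Hz2 : - (v i * fsum p (fun j => s j * Q i j)) = 0).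
  { apply Hz; auto. replace (fsum p (fun i0 => - (v i0 * fsum p (fun j => s j * Q i0 j))))
     with (-1 * fsum p (fun i0 => v i0 * fsum p (fun j => s j * Q i0 j))).
    rewrite Hsum; ring. rewrite <- fsum_scal; apply fsum_ext; intros; ring. }
  rewrite Hdec, Hrow in Hz2; auto.
  assert (H0 : fsum p (fun j => (1 - s j) * Q i j) = 0) by nra.
  assert (H1 := fsum_zero_each p _ (Hnonneg2 i Hi Hv) H0 k Hkp).
  unfold s in H1. destruct (Rlt_dec 0 (v k)); auto. nra.
Qed.

Lemma inker_opp p Q v : inker p Q v -> inker p Q (fun i => - v i).
Proof. intros H j Hj. unfold vmul. rewrite <- (Rmult_0_r (-1)), <- (H j Hj).
  unfold vmul. rewrite <- fsum_scal. apply fsum_ext; intros; ring. Qed.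

Lemma reach_pos p Q v : is_generator p Q -> inker p Q v ->
  forall i j, reach p Q i j -> (i < p)%nat -> 0 < v i -> 0 < v j.
Proof. intros Hg Hk i j Hr. induction Hr; auto. intros. apply IHHr; auto.
  eapply pos_prop; eauto. Qed.

Lemma trich p Q v : is_generator p Q -> irreducible p Q -> inker p Q v ->
  (forall i, (i < p)%nat -> 0 < v i) \/ (forall i, (i < p)%nat -> v i < 0) \/
  (forall i, (i < p)%nat -> v i = 0).
Proof.
  intros Hg Hirr Hk.
  destruct (classic (exists i, (i < p)%nat /\ 0 < v i)) as [[i [Hi Hv]]|Hn].
  { left. intros j Hj. exact (reach_pos p Q v Hg Hk i j (Hirr i j Hi Hj) Hi Hv). }
  destruct (classic (exists i, (i < p)%nat /\ v i < 0)) as [[i [Hi Hv]]|Hn2].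
  { right; left. intros j Hj.
    assert (0 < - v j).
    { apply (reach_pos p Q (fun i => - v i) Hg (inker_opp _ _ _ Hk) i j (Hirr i j Hi Hj) Hi). lra. }
    lra. }
  right; right. intros i Hi. destruct (Rtotal_order (v i) 0) as [h|[h|h]]; auto.
  exfalso; apply Hn2; eauto. exfalso; apply Hn; eauto.
Qed.

Lemma mpow_diag p C : (forall i j, (i < p)%nat -> (j < p)%nat -> i <> j -> C i j = 0) ->
  forall n i j, (i < p)%nat -> (j < p)%nat ->
  mpow p C n i j = if Nat.eqb i j then C i i ^ n else 0.
Proof.
  intros Hd n; induction n; intros i j Hi Hj; simpl.
  - unfold mid. destruct (Nat.eqb i j); auto.
  - unfold mmul. rewrite (fsum_single p _ j Hj).
    + rewrite IHn; auto. destruct (Nat.eqb_spec i j); [subst; ring|ring].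
    + intros k Hk Hkj. rewrite Hd; auto; ring.
Qed.

Lemma inf_sum_zero : infinite_sum (fun _ => 0) 0.
Proof. intros eps He. exists 0%nat. intros. rewrite sum_cte. unfold R_dist.
  rewrite Rmult_0_l, Rminus_0_r, Rabs_R0. auto. Qed.

Lemma mexp_diag p C t E : (forall i j, (i < p)%nat -> (j < p)%nat -> i <> j -> C i j = 0) ->
  is_mexp p C t E -> forall i j, (i < p)%nat -> (j < p)%nat ->
  E i j = if Nat.eqb i j then exp (C i i * t) else 0.
Proof.
  intros Hd HE i j Hi Hj. specialize (HE i j Hi Hj).
  destruct (Nat.eqb_spec i j).
  - subst. apply (uniqueness_sum _ _ _ HE).
    replace (fun n => t ^ n / INR (Factorial.fact n) * mpow p C n j j) with
      (fun n => / INR (Factorial.fact n) * (C j j * t) ^ n).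
    + exact (proj2_sig (exist_exp (C j j * t))).
    + apply functional_extensionality; intros m. rewrite mpow_diag; auto.
      rewrite Nat.eqb_refl, Rpow_mult_distr. unfold Rdiv. ring.
  - apply (uniqueness_sum _ _ _ HE).
    replace (fun n => t ^ n / INR (Factorial.fact n) * mpow p C n i j) with (fun _ : nat => 0).
    + exact inf_sum_zero.
    + apply functional_extensionality; intros m. rewrite mpow_diag; auto.
      destruct (Nat.eqb_spec i j) as [e|e]; [contradiction|ring].
Qed.

Theorem proposition3 (p : nat) (C D Ci : nat -> nat -> R)
  (pi alpha : nat -> R) :
  is_MSPP p C D ->
  is_inverse p C Ci ->
  is_stat_gen p (madd C D) pi ->
  is_stat_dtmc p (mmul p (mopp Ci) D) alpha ->
  forall (t : R), 0 <= t ->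
  forall (E : nat -> nat -> R), is_mexp p C t E ->
    vsum1 p (vmul p alpha E) <= vsum1 p (vmul p pi E).
Proof.
  intros [[HD [_ [Hgen [Hirr _]]]] Hdiag] [Hinv _] [Hpi Hpi1] [Hal Hal1] t Ht E HE.
  set (Q := madd C D) in *.
  assert (Hp : (0 < p)%nat). { destruct p; [simpl in Hpi1; unfold vsum1 in Hpi1; simpl in Hpi1; lra|lia]. }
  assert (HCi : forall i j, (i < p)%nat -> (j < p)%nat -> C i i * Ci i j = mid i j).
  { intros i j Hi Hj. rewrite <- (Hinv i j Hi Hj). unfold mmul.
    rewrite (fsum_single p _ i Hi); auto. intros k Hk Hki. rewrite Hdiag; auto; ring. }
  assert (Hc0 : forall i, (i < p)%nat -> C i i <> 0).
  { intros i Hi Hc. specialize (HCi i i Hi Hi). unfold mid in HCi. rewrite Nat.eqb_refl in HCi.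
    rewrite Hc in HCi; lra. }
  assert (HCi2 : forall i j, (i < p)%nat -> (j < p)%nat -> Ci i j = if Nat.eqb i j then / C i i else 0).
  { intros i j Hi Hj. specialize (HCi i j Hi Hj). unfold mid in HCi.
    destruct (Nat.eqb i j).
    - field_simplify_eq; auto. rewrite <- HCi; ring.
    - assert (H := Hc0 i Hi). apply Rmult_integral in HCi as [h|h]; [contradiction|auto]. }
  assert (Hd : forall i, (i < p)%nat -> - C i i = fsum p (fun j => D i j)).
  { intros i Hi. destruct Hgen as [_ Hrow]. specialize (Hrow i Hi). unfold Q, madd in Hrow.
    assert (h : fsum p (fun j => C i j + D i j) = C i i + fsum p (fun j => D i j)).
    { rewrite fsum_plus. f_equal. apply (fsum_single p (fun j => C i j) i Hi). intros; apply Hdiag; auto. }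
    rewrite h in Hrow. lra. }
  assert (Hdn : forall i, (i < p)%nat -> 0 <= - C i i).
  { intros; rewrite Hd; auto; apply fsum_nonneg; intros; apply HD; auto. }
  assert (HP : forall i j, (i < p)%nat -> (j < p)%nat -> mmul p (mopp Ci) D i j = - D i j / C i i).
  { intros i j Hi Hj. unfold mmul, mopp. rewrite (fsum_single p _ i Hi).
    rewrite HCi2; auto. rewrite Nat.eqb_refl. field; auto.
    intros k Hk Hki. rewrite HCi2; auto. destruct (Nat.eqb_spec i k); [congruence|ring]. }
  set (gam i := - alpha i / C i i).
  assert (Hgk : inker p Q gam).
  { intros j Hj. unfold vmul, Q, madd.
    transitivity (fsum p (fun i => gam i * C i j) + fsum p (fun i => gam i * D i j)).
    { rewrite <- fsum_plus. apply fsum_ext; intros; ring. }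
    rewrite (fsum_single p _ j Hj).
    2:{ intros i Hi Hij. rewrite Hdiag; auto; ring. }
    unfold gam.
    assert (fsum p (fun i => - alpha i / C i i * D i j) = vmul p alpha (mmul p (mopp Ci) D) j).
    { unfold vmul. apply fsum_ext; intros. rewrite HP; auto. field. auto. }
    rewrite H, (Hal j Hj). field. auto. }
  set (g := fsum p gam).
  set (u i := gam i - g * pi i).
  assert (Huk : inker p Q u).
  { intros j Hj. unfold vmul, u.
    transitivity (fsum p (fun i => gam i * Q i j) + (- g) * fsum p (fun i => pi i * Q i j)).
    { rewrite <- fsum_scal, <- fsum_plus. apply fsum_ext; intros; ring. }
    pose proof (Hgk j Hj) as h1. pose proof (Hpi j Hj) as h2. unfold vmul in h1, h2.
    rewrite h1, h2. ring. }
  assert (Hus : fsum p u = 0).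
  { unfold u. transitivity (fsum p gam + (- g) * fsum p pi).
    { rewrite <- fsum_scal, <- fsum_plus. apply fsum_ext; intros; ring. }
    unfold vsum1 in Hpi1. rewrite Hpi1. fold g. ring. }
  assert (Hu0 : forall i, (i < p)%nat -> u i = 0).
  { destruct (trich p Q u Hgen Hirr Huk) as [h|[h|h]]; auto.
    - pose proof (fsum_pos p u Hp h). lra.
    - pose proof (fsum_pos p (fun i => - u i) Hp ltac:(intros i Hi; specialize (h i Hi); lra)).
      replace (fsum p (fun i => - u i)) with (-1 * fsum p u) in H by
        (rewrite <- fsum_scal; apply fsum_ext; intros; ring). lra. }
  assert (Hal2 : forall i, (i < p)%nat -> alpha i = g * pi i * - C i i).
  { intros i Hi. specialize (Hu0 i Hi). unfold u, gam in Hu0.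
    assert (- alpha i / C i i = g * pi i) by lra.
    rewrite <- H. field. auto. }
  assert (Hpin : forall i, (i < p)%nat -> 0 <= pi i).
  { destruct (trich p Q pi Hgen Hirr Hpi) as [h|[h|h]].
    - intros; left; auto.
    - pose proof (fsum_pos p (fun i => - pi i) Hp ltac:(intros i Hi; specialize (h i Hi); lra)).
      replace (fsum p (fun i => - pi i)) with (-1 * fsum p pi) in H by
        (rewrite <- fsum_scal; apply fsum_ext; intros; ring). unfold vsum1 in Hpi1. lra.
    - intros i Hi; rewrite h; auto; lra. }
  pose proof (mexp_diag p C t E Hdiag HE) as HEd.
  set (e i := exp (C i i * t)).
  assert (Hv : forall v, vsum1 p (vmul p v E) = fsum p (fun i => v i * e i)).
  { intros v. unfold vsum1, vmul. apply fsum_ext; intros j Hj.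
    rewrite (fsum_single p _ j Hj). rewrite HEd; auto. rewrite Nat.eqb_refl. reflexivity.
    intros i Hi Hij. rewrite HEd; auto. destruct (Nat.eqb_spec i j); [congruence|ring]. }
  rewrite !Hv.
  set (dd i := - C i i).
  set (S := fsum p (fun i => pi i * dd i)).
  set (A := fsum p (fun i => pi i * dd i * e i)).
  set (Bv := fsum p (fun i => pi i * e i)).
  assert (HL : fsum p (fun i => alpha i * e i) = g * A).
  { unfold A. rewrite <- fsum_scal. apply fsum_ext; intros. rewrite Hal2; auto. unfold dd; ring. }
  assert (HgS : g * S = 1).
  { rewrite <- Hal1. unfold vsum1, S. rewrite <- fsum_scal. apply fsum_ext; intros.
    rewrite Hal2; auto. unfold dd; ring. }
  assert (HS0 : 0 <= S). { apply fsum_nonneg; intros. apply Rmult_le_pos; auto. apply Hdn; auto. }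
  (* Chebyshev *)
  assert (HX : 0 <= fsum p (fun i => fsum p (fun j => pi i * pi j * ((dd j - dd i) * (e i - e j))))).
  { apply fsum_nonneg; intros i Hi; apply fsum_nonneg; intros j Hj.
    apply Rmult_le_pos. apply Rmult_le_pos; auto.
    unfold e, dd. destruct (Rle_dec (- C i i) (- C j j)).
    - apply Rmult_le_pos. lra.
      destruct (Rle_lt_or_eq_dec _ _ r) as [h|h].
      + destruct Ht as [Ht|Ht].
        * left. apply Rlt_0_minus. apply exp_increasing. nra.
        * subst. rewrite !Rmult_0_r. lra.
      + replace (C j j) with (C i i) by lra. lra.
    - assert (e i <= e j).
      { unfold e. destruct Ht as [Ht|Ht].
        * left. apply exp_increasing. nra.
        * subst. rewrite !Rmult_0_r. lra. }
      unfold e in H. nra. }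
  assert (HXe : fsum p (fun i => fsum p (fun j => pi i * pi j * ((dd j - dd i) * (e i - e j))))
               = 2 * (S * Bv - A)).
  { transitivity (fsum p (fun i => (pi i * e i) * S + (- pi i) * A + (- (pi i * dd i * e i)) * 1
                     + (pi i * dd i) * Bv)).
    { apply fsum_ext; intros i Hi.
      transitivity (fsum p (fun j => (pi i * e i) * (pi j * dd j) + (- pi i) * (pi j*dd j*e j)
          + (-(pi i*dd i*e i)) * pi j + (pi i*dd i)*(pi j*e j))).
      { apply fsum_ext; intros; ring. }
      rewrite (fsum_lin4 p _ _ _ _ (fun j => pi j * dd j) (fun j => pi j*dd j*e j) pi (fun j => pi j * e j)).
      unfold vsum1 in Hpi1; rewrite Hpi1. reflexivity. }
    transitivity (fsum p (fun i => S * (pi i * e i) + (- A) * pi i + (-1) * (pi i * dd i * e i)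
                     + Bv * (pi i * dd i))).
    { apply fsum_ext; intros; ring. }
    rewrite (fsum_lin4 p _ _ _ _ (fun i => pi i * e i) pi (fun i => pi i * dd i * e i) (fun i => pi i * dd i)).
    unfold vsum1 in Hpi1; rewrite Hpi1. fold S A Bv. ring. }
  rewrite HL. fold Bv.
  assert (HSp : 0 < S) by (destruct HS0 as [h|h]; [exact h| rewrite <- h in HgS; lra]).
  assert (Hg : 0 < g) by nra.
  assert (A <= S * Bv) by lra.
  replace Bv with (g * (S * Bv)) by (transitivity ((g * S) * Bv); [ring| rewrite HgS; ring]).
  apply Rmult_le_compat_l; lra.
Qed.
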